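(* Let $\Bbbk$ be a field of characteristic $2$, $G=\langle\sigma\rangle$ cyclic of order $4$ acting on $V=V_3$ with $\sigma x_1=x_1+x_2$, $\sigma x_2=x_2+x_3$, $\sigma x_3=x_3$ on the dual basis, $H=\langle\sigma^2\rangle$, and $A=\Bbbk[N^G(x_1),N^G_H(x_2),x_3]$ with $N^G(x_1)=\prod_{i=0}^3\sigma^i(x_1)$, $N^G_H(x_2)=x_2(x_2+x_3)$. Let $N^H(x_1)=x_1\sigma^2(x_1)=x_1(x_1+x_3)$. Then $K_2=\ker(\Delta^2:\Bbbk[V]\to\Bbbk[V])$ is a free $A$-module with basis $\{1,\ x_2,\ N^H(x_1),\ x_2N^H(x_1)\}$.
   Context: $\Delta=\sigma-\iota\in\Bbbk G$ acting on $\Bbbk[V]=\Bbbk[x_1,x_2,x_3]$. *)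

(* Defs.v *)
From HB Require Import structures.
From mathcomp Require Import all_boot all_order all_algebra.
From mathcomp Require Import mpoly.
Set Implicit Arguments. Unset Strict Implicit. Unset Printing Implicit Defensive.
Import GRing.Theory.
Local Open Scope ring_scope.

Section Defs.
Variable k : fieldType.

Definition x1 : {mpoly k[3]} := 'X_(@Ordinal 3 0 isT).
Definition x2 : {mpoly k[3]} := 'X_(@Ordinal 3 1 isT).
Definition x3 : {mpoly k[3]} := 'X_(@Ordinal 3 2 isT).

Definition sigma (p : {mpoly k[3]}) : {mpoly k[3]} :=
  p \mPo [tuple x1 + x2; x2 + x3; x3].

Definition Delta (p : {mpoly k[3]}) : {mpoly k[3]} := sigma p - p.

Definition K2 : pred {mpoly k[3]} := fun p => Delta (Delta p) == 0.

Definition NG_x1 : {mpoly k[3]} := \prod_(i < 4) iter i sigma x1.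
Definition NGH_x2 : {mpoly k[3]} := x2 * (x2 + x3).
Definition NH_x1 : {mpoly k[3]} := x1 * iter 2 sigma x1.

(* the generators of A = k[N^G(x1), N^G_H(x2), x3]; the element of A
   represented by q in k[y1,y2,y3] is q(N^G(x1), N^G_H(x2), x3) *)
Definition inA (q : {mpoly k[3]}) : {mpoly k[3]} :=
  q \mPo [tuple NG_x1; NGH_x2; x3].

Definition basisK2 : 4.-tuple {mpoly k[3]} :=
  [tuple 1; x2; NH_x1; x2 * NH_x1].

Definition Acomb (q : 4.-tuple {mpoly k[3]}) : {mpoly k[3]} :=
  \sum_(i < 4) inA (tnth q i) * tnth basisK2 i.
End Defs.

(* Main.v *)
Require Import Defs.
From HB Require Import structures.
From mathcomp Require Import all_boot all_order all_algebra.
From mathcomp Require Import mpoly ring.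
Set Implicit Arguments. Unset Strict Implicit. Unset Printing Implicit Defensive.
Import GRing.Theory.
Local Open Scope ring_scope.

Lemma comp_mpolyA (R : comNzRingType) n m l (p : {mpoly R[n]})
   (t : n.-tuple {mpoly R[m]}) (u : m.-tuple {mpoly R[l]}) :
  (p \mPo t) \mPo u = p \mPo [tuple (tnth t i) \mPo u | i < n].
Proof.
rewrite [p \mPo t]comp_mpolyEX raddf_sum /= [RHS]comp_mpolyEX; apply: eq_bigr => mm _.
rewrite comp_mpolyZ; congr (_ *: _).
rewrite !comp_mpolyX rmorph_prod /=; apply: eq_bigr => i _.
by rewrite rmorphXn /= tnth_mktuple.
Qed.

Lemma decomp (R : comNzRingType) n (T : n.-tuple {mpoly R[n]}) (j m : 'I_n)
  (jm : j != m) (hj : tnth T j = 'X_j * ('X_j + 'X_m))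
  (ho : forall i, i != j -> tnth T i = 'X_i) (p : {mpoly R[n]}) :
  exists h0 h1, p = h0 \mPo T + 'X_j * (h1 \mPo T).
Proof.
have XT i : i != j -> 'X_i \mPo T = 'X_i.
  by move=> /ho hi; rewrite comp_mpolyXU -tnth_nth hi.
pose Q (p : {mpoly R[n]}) := exists h0 h1, p = h0 \mPo T + 'X_j * (h1 \mPo T).
have QX i q : Q q -> Q ('X_i * q).
  case=> h0 [h1 ->]; case: (eqVneq i j) => [->|ij].
    exists ('X_j * h1), (h0 - 'X_m * h1).
    rewrite rmorphM rmorphB rmorphM /=  comp_mpolyXU -tnth_nth hj.
    rewrite XT; last by rewrite eq_sym.
    ring.
  exists ('X_i * h0), ('X_i * h1).
  rewrite !rmorphM /= XT //; ring.
have Q1 : Q 1 by exists 1, 0; rewrite rmorph1 rmorph0 mulr0 addr0.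
have QD q q' : Q q -> Q q' -> Q (q + q').
  case=> a [b ->] [c [d ->]]; exists (a + c), (b + d).
  rewrite !rmorphD /=; ring.
have QZ c q : Q q -> Q (c *: q).
  case=> a [b ->]; exists (c *: a), (c *: b).
  by rewrite !comp_mpolyZ scalerDr scalerAr.
have Q0 : Q 0 by exists 0, 0; rewrite rmorph0 mulr0 addr0.
elim/mpolyind: p => // c mm q _ _ Qq; apply: QD => //; apply: QZ.
rewrite mpolyXE_id; elim/big_rec: _ => // i x _ Qx.
elim: (mm i) => [|e IH]; first by rewrite expr0 mul1r.
by rewrite exprS -mulrA; apply: QX.
Qed.
Set Implicit Arguments. Unset Strict Implicit. Unset Printing Implicit Defensive.
Import GRing.Theory.
Local Open Scope ring_scope.

Lemma two0 (k : fieldType) (hchar : 2 \in [pchar k]) : (2 : {mpoly k[3]}) = 0.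
Proof.
rewrite -(rmorph_nat (@mpolyC 3 k)) (pcharf0 hchar). exact: rmorph0.
Qed.

Lemma c2 (k : fieldType) (hchar : 2 \in [pchar k]) (a b r : {mpoly k[3]}) :
  a = b + 2 * r -> a = b.
Proof. by rewrite two0 // mul0r addr0. Qed.

Lemma c_x1 (k : fieldType) (a b c : {mpoly k[3]}) : x1 k \mPo [tuple a; b; c] = a.
Proof. by rewrite comp_mpolyXU. Qed.
Lemma c_x2 (k : fieldType) (a b c : {mpoly k[3]}) : x2 k \mPo [tuple a; b; c] = b.
Proof. by rewrite comp_mpolyXU. Qed.
Lemma c_x3 (k : fieldType) (a b c : {mpoly k[3]}) : x3 k \mPo [tuple a; b; c] = c.
Proof. by rewrite comp_mpolyXU. Qed.

Lemma mapt3 (k : fieldType) (a b c : {mpoly k[3]}) (u : 3.-tuple {mpoly k[3]}) :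
  [tuple tnth [tuple a; b; c] i \mPo u | i < 3] = [tuple a \mPo u; b \mPo u; c \mPo u].
Proof.
by apply: eq_from_tnth => i; rewrite tnth_mktuple; case: i => [[|[|[|?]]] ?].
Qed.

Lemma compA3 (k : fieldType) (p a b c : {mpoly k[3]}) (u : 3.-tuple {mpoly k[3]}) :
  (p \mPo [tuple a; b; c]) \mPo u = p \mPo [tuple a \mPo u; b \mPo u; c \mPo u].
Proof. by rewrite comp_mpolyA mapt3. Qed.

Definition Nn (k : fieldType) : {mpoly k[3]} := x1 k * (x1 k + x3 k).
Definition Bb (k : fieldType) : {mpoly k[3]} := x2 k * (x2 k + x3 k).
Definition tauT (k : fieldType) : 3.-tuple {mpoly k[3]} := [tuple x1 k + x3 k; x2 k; x3 k].
Definition rhoT (k : fieldType) : 3.-tuple {mpoly k[3]} := [tuple x1 k; x2 k + x3 k; x3 k].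
Definition sigT (k : fieldType) : 3.-tuple {mpoly k[3]} := [tuple x1 k + x2 k; x2 k + x3 k; x3 k].

Lemma ss (k : fieldType) (hchar : 2 \in [pchar k]) (p : {mpoly k[3]}) :
  sigma (sigma p) = p \mPo tauT k.
Proof.
rewrite /sigma compA3 !rmorphD /= !c_x1 !c_x2 !c_x3.
rewrite (@c2 k hchar (x1 k + x2 k + (x2 k + x3 k)) (x1 k + x3 k) (x2 k)); last by ring.
by rewrite (@c2 k hchar (x2 k + x3 k + x3 k) (x2 k) (x3 k)); last by ring.
Qed.

Lemma K2E (k : fieldType) (hchar : 2 \in [pchar k]) (f : {mpoly k[3]}) :
  K2 f <-> f \mPo tauT k = f.
Proof.
rewrite /K2 /Delta.
have -> : sigma (sigma f - f) = sigma (sigma f) - sigma f by rewrite /sigma rmorphB.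
rewrite ss //.
rewrite (@c2 k hchar (f \mPo tauT k - sigma f - (sigma f - f)) (f \mPo tauT k - f) (f - sigma f)); last by ring.
by rewrite subr_eq0; split => /eqP.
Qed.

Lemma NH_eq (k : fieldType) (hchar : 2 \in [pchar k]) : NH_x1 k = Nn k.
Proof. by rewrite /NH_x1 /= ss // c_x1. Qed.

Lemma NG_eq (k : fieldType) (hchar : 2 \in [pchar k]) : NG_x1 k = Nn k * (Nn k + Bb k).
Proof.
rewrite /NG_x1 !big_ord_recr big_ord0 /= ss // c_x1.
rewrite /sigma rmorphD /= !comp_mpolyXU /=.
apply: (@c2 k hchar _ _ (Nn k * x1 k * x2 k)); rewrite /Nn /Bb; ring.
Qed.

Section Fix.
End Fix.

Lemma tau_N (k : fieldType) (hchar : 2 \in [pchar k]) : Nn k \mPo tauT k = Nn k.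
Proof.
rewrite /Nn rmorphM rmorphD /= !comp_mpolyXU /=.
apply: (@c2 k hchar _ _ ((x1 k + x3 k) * x3 k)); ring.
Qed.
Lemma tau_B (k : fieldType) : Bb k \mPo tauT k = Bb k.
Proof. by rewrite /Bb rmorphM rmorphD /= !comp_mpolyXU. Qed.
Lemma sig_N (k : fieldType) (hchar : 2 \in [pchar k]) : Nn k \mPo sigT k = Nn k + Bb k.
Proof.
rewrite /Nn /Bb rmorphM rmorphD /= !comp_mpolyXU /=.
apply: (@c2 k hchar _ _ (x1 k * x2 k)); ring.
Qed.
Lemma sig_B (k : fieldType) (hchar : 2 \in [pchar k]) : Bb k \mPo sigT k = Bb k.
Proof.
rewrite /Bb rmorphM rmorphD /= !comp_mpolyXU /=.
apply: (@c2 k hchar _ _ ((x2 k + x3 k) * x3 k)); ring.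
Qed.
Lemma rho_N (k : fieldType) : Nn k \mPo rhoT k = Nn k.
Proof. by rewrite /Nn rmorphM rmorphD /= !comp_mpolyXU. Qed.
Lemma rho_B (k : fieldType) (hchar : 2 \in [pchar k]) : Bb k \mPo rhoT k = Bb k.
Proof.
rewrite /Bb rmorphM rmorphD /= !comp_mpolyXU /=.
apply: (@c2 k hchar _ _ ((x2 k + x3 k) * x3 k)); ring.
Qed.

Lemma inA_fix (k : fieldType) (hchar : 2 \in [pchar k]) (q : {mpoly k[3]}) :
  [/\ inA q \mPo tauT k = inA q, inA q \mPo sigT k = inA q & inA q \mPo rhoT k = inA q].
Proof.
rewrite /inA !compA3 NG_eq //.
have -> : NGH_x2 k = Bb k by [].
have e3 : forall t : 3.-tuple {mpoly k[3]}, tnth t (@Ordinal 3 2 isT) = x3 k -> x3 k \mPo t = x3 k.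
  by move=> t ht; rewrite comp_mpolyXU -tnth_nth.
rewrite (e3 (tauT k)) // (e3 (sigT k)) // (e3 (rhoT k)) //.
have hT : Nn k * (Nn k + Bb k) \mPo tauT k = Nn k * (Nn k + Bb k).
  by rewrite rmorphM rmorphD /= tau_N // tau_B.
have hR : Nn k * (Nn k + Bb k) \mPo rhoT k = Nn k * (Nn k + Bb k).
  by rewrite rmorphM rmorphD /= rho_N // rho_B.
have hS : Nn k * (Nn k + Bb k) \mPo sigT k = Nn k * (Nn k + Bb k).
  rewrite rmorphM rmorphD /= sig_N // sig_B //.
  apply: (@c2 k hchar _ _ ((Nn k + Bb k) * Bb k)); ring.
by rewrite hT hR hS tau_B sig_B // rho_B.
Qed.

Lemma x3_neq0 (k : fieldType) : x3 k != 0.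
Proof.
apply/negP => /eqP h; have := congr1 (meval (fun _ => (1 : k))) h.
rewrite mevalXU /= meval0 => h1; by have := @oner_neq0 k; rewrite h1 eqxx.
Qed.

Lemma B_neq0 (k : fieldType) : Bb k != 0.
Proof.
apply/negP => /eqP h.
have := congr1 (meval (fun i : 'I_3 => if (nat_of_ord i <= 1)%N then (1 : k) else 0)) h.
rewrite /Bb rmorphM rmorphD /= !mevalXU /= meval0 mul1r addr0 => h1.
by have := @oner_neq0 k; rewrite h1 eqxx.
Qed.

Lemma Acomb4 (k : fieldType) (a b c d : {mpoly k[3]}) :
  Acomb [tuple a; b; c; d] = inA a + inA b * x2 k + inA c * NH_x1 k + inA d * (x2 k * NH_x1 k).
Proof.
rewrite /Acomb !big_ord_recr big_ord0 /= !(tnth_nth 0) /=.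
by rewrite add0r mulr1.
Qed.

Lemma span (k : fieldType) (hchar : 2 \in [pchar k]) (f : {mpoly k[3]}) :
  f \mPo tauT k = f -> exists q, f = Acomb q.
Proof.
move=> H.
pose T1 : 3.-tuple {mpoly k[3]} := [tuple Nn k; x2 k; x3 k].
pose T' : 3.-tuple {mpoly k[3]} := [tuple x1 k; Bb k; x3 k].
pose T'' : 3.-tuple {mpoly k[3]} := [tuple x1 k * (x1 k + x2 k); x2 k; x3 k].
pose U : 3.-tuple {mpoly k[3]} := [tuple Nn k; Bb k; x3 k].
have [g0 [g1 hf]] := @decomp _ _ T1 (@Ordinal 3 0 isT) (@Ordinal 3 2 isT) isT erefl
  ltac:(by move=> [[|[|[|i]]] hi] //= _; rewrite (bool_irrelevance hi isT)) f.
change ('X_(@Ordinal 3 0 isT)) with (x1 k) in hf.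
have tf p : (p \mPo T1) \mPo tauT k = p \mPo T1.
  by rewrite compA3 tau_N // /tauT c_x2 c_x3.
move: H; rewrite hf rmorphD rmorphM /= !tf /tauT c_x1 => H.
have : x3 k * (g1 \mPo T1) = 0.
  have -> : x3 k * (g1 \mPo T1) = (g0 \mPo T1 + (x1 k + x3 k) * (g1 \mPo T1))
     - (g0 \mPo T1 + x1 k * (g1 \mPo T1)) by ring.
  by rewrite H subrr.
move/eqP; rewrite mulf_eq0 (negbTE (x3_neq0 k)) /= => /eqP hg1.
rewrite hg1 mulr0 addr0 in hf.
have [h0 [h1 hg0]] := @decomp _ _ T' (@Ordinal 3 1 isT) (@Ordinal 3 2 isT) isT erefl
  ltac:(by move=> [[|[|[|i]]] hi] //= _; rewrite (bool_irrelevance hi isT)) g0.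
change ('X_(@Ordinal 3 1 isT)) with (x2 k) in hg0.
have [a [c ha]] := @decomp _ _ T'' (@Ordinal 3 0 isT) (@Ordinal 3 1 isT) isT erefl
  ltac:(by move=> [[|[|[|i]]] hi] //= _; rewrite (bool_irrelevance hi isT)) h0.
have [b [d hb]] := @decomp _ _ T'' (@Ordinal 3 0 isT) (@Ordinal 3 1 isT) isT erefl
  ltac:(by move=> [[|[|[|i]]] hi] //= _; rewrite (bool_irrelevance hi isT)) h1.
change ('X_(@Ordinal 3 0 isT)) with (x1 k) in ha.
change ('X_(@Ordinal 3 0 isT)) with (x1 k) in hb.
have L1 p : (p \mPo T') \mPo T1 = p \mPo U.
  rewrite compA3 c_x1 c_x3; congr (p \mPo [tuple _; _; _]).
  by rewrite /Bb rmorphM rmorphD /= c_x2 c_x3.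
have L2 p : (p \mPo T'') \mPo U = inA p.
  rewrite compA3 /inA NG_eq // c_x2 c_x3; congr (p \mPo [tuple _; _; _]).
  by rewrite rmorphM rmorphD /= c_x1 c_x2.
exists [tuple a; b; c; d]. rewrite Acomb4 hg1 mulr0 addr0 hg0 rmorphD rmorphM /= !L1 c_x2.
rewrite ha hb !rmorphD !rmorphM /= !L2 c_x1 NH_eq //.
ring.
Qed.

Lemma tuple4 (T : Type) (q : 4.-tuple T) :
  q = [tuple tnth q (@Ordinal 4 0 isT); tnth q (@Ordinal 4 1 isT);
             tnth q (@Ordinal 4 2 isT); tnth q (@Ordinal 4 3 isT)].
Proof.
by apply: eq_from_tnth => -[[|[|[|[|i]]]] hi] //; rewrite (bool_irrelevance hi isT).
Qed.

Lemma fixed_span (k : fieldType) (hchar : 2 \in [pchar k]) (q : 4.-tuple {mpoly k[3]}) :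
  Acomb q \mPo tauT k = Acomb q.
Proof.
rewrite [q]tuple4 Acomb4 NH_eq // !rmorphD /=.
have hi i : inA (tnth q i) \mPo tauT k = inA (tnth q i).
  by have [-> _ _] := inA_fix hchar (tnth q i).
have h2 : x2 k \mPo tauT k = x2 k by rewrite /tauT c_x2.
have hN : Nn k \mPo tauT k = Nn k by rewrite tau_N.
have h2N : (x2 k * Nn k) \mPo tauT k = x2 k * Nn k by rewrite rmorphM /= h2 hN.
have hM u v : u \mPo tauT k = u -> v \mPo tauT k = v -> (u * v) \mPo tauT k = u * v.
  by move=> hu hv; rewrite rmorphM /= hu hv.
by rewrite (hM _ _ (hi _) h2) (hM _ _ (hi _) hN) (hM _ _ (hi _) h2N) hi.
Qed.

Lemma compM2 (k : fieldType) (t : 3.-tuple {mpoly k[3]}) (u v u' v' : {mpoly k[3]}) :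
  u \mPo t = u' -> v \mPo t = v' -> (u * v) \mPo t = u' * v'.
Proof. by move=> hu hv; rewrite rmorphM /= hu hv. Qed.

Lemma Lu2 (k : fieldType) (hchar : 2 \in [pchar k]) (a c : {mpoly k[3]}) :
  a \mPo sigT k = a -> c \mPo sigT k = c -> a + c * Nn k = 0 -> a = 0 /\ c = 0.
Proof.
move=> sa sc E.
have E' := congr1 (comp_mpoly (sigT k)) E.
rewrite rmorphD /= sa (compM2 sc (sig_N hchar)) rmorph0 in E'.
have : Bb k * c = 0.
  have -> : Bb k * c = (a + c * (Nn k + Bb k)) - (a + c * Nn k) by ring.
  by rewrite E E' subrr.
move/eqP; rewrite mulf_eq0 (negbTE (B_neq0 k)) /= => /eqP hc.
by move: E; rewrite hc mul0r addr0.
Qed.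

Lemma Lu (k : fieldType) (hchar : 2 \in [pchar k]) (a b c d : {mpoly k[3]}) :
  a \mPo sigT k = a -> a \mPo rhoT k = a ->
  b \mPo sigT k = b -> b \mPo rhoT k = b ->
  c \mPo sigT k = c -> c \mPo rhoT k = c ->
  d \mPo sigT k = d -> d \mPo rhoT k = d ->
  a + b * x2 k + c * Nn k + d * (x2 k * Nn k) = 0 ->
  [/\ a = 0, b = 0, c = 0 & d = 0].
Proof.
move=> sa ra sb rb sc rc sd rd E.
have E' := congr1 (comp_mpoly (rhoT k)) E.
have h2r : x2 k \mPo rhoT k = x2 k + x3 k by rewrite /rhoT c_x2.
rewrite !rmorphD /= ra (compM2 rb h2r) (compM2 rc (rho_N k)) in E'.
rewrite (compM2 rd (compM2 h2r (rho_N k))) rmorph0 in E'.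
have : x3 k * (b + d * Nn k) = 0.
  have -> : x3 k * (b + d * Nn k) =
     (a + b * (x2 k + x3 k) + c * Nn k + d * ((x2 k + x3 k) * Nn k))
     - (a + b * x2 k + c * Nn k + d * (x2 k * Nn k)) by ring.
  by rewrite E E' subrr.
move/eqP; rewrite mulf_eq0 (negbTE (x3_neq0 k)) /= => /eqP F.
have G : a + c * Nn k = 0.
  have -> : a + c * Nn k = (a + b * x2 k + c * Nn k + d * (x2 k * Nn k))
     - x2 k * (b + d * Nn k) by ring.
  by rewrite E F mulr0 subrr.
have [-> ->] := Lu2 hchar sa sc G.
by have [-> ->] := Lu2 hchar sb sd F.
Qed.

Theorem proposition4p17 (k : fieldType) (hchar : 2 \in [pchar k]) :
  (forall f : {mpoly k[3]}, K2 f <-> exists q : 4.-tuple {mpoly k[3]}, f = Acomb q)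
  /\
  (forall q q' : 4.-tuple {mpoly k[3]},
      Acomb q = Acomb q' -> forall i : 'I_4, inA (tnth q i) = inA (tnth q' i)).
Proof.
split.
  move=> f; split; first by move/(K2E hchar); apply: span.
  by case=> q ->; apply/(K2E hchar); apply: fixed_span.
move=> q q' E.
have fx u v : (inA u - inA v) \mPo sigT k = inA u - inA v /\
              (inA u - inA v) \mPo rhoT k = inA u - inA v.
  have [_ s1 r1] := inA_fix hchar u; have [_ s2 r2] := inA_fix hchar v.
  by rewrite !rmorphB /= s1 s2 r1 r2.
have key : [/\ inA (tnth q (@Ordinal 4 0 isT)) = inA (tnth q' (@Ordinal 4 0 isT)),
    inA (tnth q (@Ordinal 4 1 isT)) = inA (tnth q' (@Ordinal 4 1 isT)),
    inA (tnth q (@Ordinal 4 2 isT)) = inA (tnth q' (@Ordinal 4 2 isT)) &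
    inA (tnth q (@Ordinal 4 3 isT)) = inA (tnth q' (@Ordinal 4 3 isT))].
  rewrite [q]tuple4 [q']tuple4 !Acomb4 (NH_eq hchar) in E.
  set a0 := tnth q _; set a1 := tnth q _; set a2 := tnth q _; set a3 := tnth q _.
  set b0 := tnth q' _; set b1 := tnth q' _; set b2 := tnth q' _; set b3 := tnth q' _.
  have [s0 r0] := fx a0 b0; have [s1 r1] := fx a1 b1.
  have [s2 r2] := fx a2 b2; have [s3 r3] := fx a3 b3.
  have := Lu hchar s0 r0 s1 r1 s2 r2 s3 r3.
  have -> : inA a0 - inA b0 + (inA a1 - inA b1) * x2 k + (inA a2 - inA b2) * Nn k +
      (inA a3 - inA b3) * (x2 k * Nn k) =
    (inA a0 + inA a1 * x2 k + inA a2 * Nn k + inA a3 * (x2 k * Nn k)) -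
    (inA b0 + inA b1 * x2 k + inA b2 * Nn k + inA b3 * (x2 k * Nn k)) by ring.
  rewrite E subrr => /(_ erefl) [h0 h1 h2 h3].
  by split; apply/subr0_eq.
case=> -[|[|[|[|i]]]] hi //; rewrite (bool_irrelevance hi isT); by case: key.
Qed.
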